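(* For all integers $N\ge1$ and $d\ge1$, $\mathcal{Q}_{N,1}^d\subseteq\mathcal{Q}_{N,1}^{N+1}$.
   Context: $\mathcal{Q}_{N,1}^d$ is the set of behaviors $(P(a|\mathbf{x}))_{a\in\{0,1\},\mathbf{x}\in\{0,1\}^N}$ of the form $P(a|\mathbf{x})=\mathrm{Tr}[\Pi_aU_{\mathbf{x}}\rho U_{\mathbf{x}}^\dagger]$, where $\rho$ is a density operator on $\mathbb{C}^N\otimes\mathbb{C}^d$ (independent of $\mathbf{x}$), $U_{\mathbf{x}}=\sum_{j=1}^N|j\rangle\langle j|\otimes U_j^{(x_j)}$ for arbitrary unitaries $U_j^{(0)},U_j^{(1)}$ on $\mathbb{C}^d$, $\{|j\rangle\}$ is the standard basis of $\mathbb{C}^N$, and $\{\Pi_0,\Pi_1\}$ is an arbitrary two-outcome POVM on $\mathbb{C}^N\otimes\mathbb{C}^d$. *)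

(* Defs.v *)
From HB Require Import structures.
From mathcomp Require Import all_boot all_order all_algebra.
From mathcomp Require Import reals.
From mathcomp.real_closed Require Import complex mxtens.
Set Implicit Arguments.
Unset Strict Implicit.
Unset Printing Implicit Defensive.
Import Order.TTheory GRing.Theory Num.Theory.
Local Open Scope ring_scope.

Section QDefs.
Variable R : realType.
Local Notation C := (R[i]).

Definition adj {m n : nat} (A : 'M[C]_(m, n)) : 'M[C]_(n, m) :=
  map_mx (fun z => z^*) A^T.

Definition unitary {n : nat} (U : 'M[C]_n) : Prop :=
  U *m adj U = 1%:M /\ adj U *m U = 1%:M.

Definition psd {n : nat} (A : 'M[C]_n) : Prop :=
  forall v : 'cV[C]_n, 0 <= (adj v *m A *m v) 0 0.

Definition density {n : nat} (rho : 'M[C]_n) : Prop :=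
  psd rho /\ \tr rho = 1.

(* two-outcome POVM {Pi false, Pi true} = {Pi_0, Pi_1} *)
Definition povm2 {n : nat} (Pi : bool -> 'M[C]_n) : Prop :=
  psd (Pi false) /\ psd (Pi true) /\ Pi false + Pi true = 1%:M.

Definition ctrlU {N d : nat} (U : 'I_N -> bool -> 'M[C]_d)
  (x : {ffun 'I_N -> bool}) : 'M[C]_(N * d) :=
  \sum_(j < N) tensmx (delta_mx j j : 'M[C]_N) (U j (x j)).

(* behaviors P(a|x) with a in {0,1} (= bool), x in {0,1}^N *)
Definition behavior (N : nat) := bool -> {ffun 'I_N -> bool} -> C.

Definition Q_N1 (N d : nat) (P : behavior N) : Prop :=
  exists (rho : 'M[C]_(N * d)) (U : 'I_N -> bool -> 'M[C]_d)
         (Pi : bool -> 'M[C]_(N * d)),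
    density rho /\ (forall j b, unitary (U j b)) /\ povm2 Pi /\
    forall a x, P a x = \tr (Pi a *m (ctrlU U x *m rho *m adj (ctrlU U x))).

End QDefs.

(* Main.v *)
Require Import Defs.
From HB Require Import structures.
From mathcomp Require Import all_boot all_order all_algebra.
From mathcomp Require Import reals ring.
From mathcomp.real_closed Require Import complex mxtens.
Set Implicit Arguments.
Unset Strict Implicit.
Unset Printing Implicit Defensive.
Import Order.TTheory GRing.Theory Num.Theory Num.Def.
Local Open Scope ring_scope.

Section Basics.
Variable R : realType.
Local Notation C := (R[i]).

Lemma adjE m n (A : 'M[C]_(m, n)) i j : adj A i j = (A j i)^*.
Proof. by rewrite /adj !mxE. Qed.

Lemma adjK m n (A : 'M[C]_(m, n)) : adj (adj A) = A.
Proof. by apply/matrixP => i j; rewrite !adjE conjCK. Qed.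

Lemma adjM m n p (A : 'M[C]_(m, n)) (B : 'M[C]_(n, p)) :
  adj (A *m B) = adj B *m adj A.
Proof.
apply/matrixP => i j; rewrite adjE !mxE rmorph_sum; apply: eq_bigr => k _.
by rewrite !adjE rmorphM mulrC.
Qed.

Lemma adjD m n (A B : 'M[C]_(m, n)) : adj (A + B) = adj A + adj B.
Proof. by apply/matrixP => i j; rewrite !(adjE, mxE) rmorphD. Qed.

Lemma adjN m n (A : 'M[C]_(m, n)) : adj (- A) = - adj A.
Proof. by apply/matrixP => i j; rewrite !(adjE, mxE) rmorphN. Qed.

Lemma adjB m n (A B : 'M[C]_(m, n)) : adj (A - B) = adj A - adj B.
Proof. by rewrite adjD adjN. Qed.

Lemma adjZ m n c (A : 'M[C]_(m, n)) : adj (c *: A) = c^* *: adj A.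
Proof. by apply/matrixP => i j; rewrite !(adjE, mxE) rmorphM. Qed.

Lemma adj0 m n : adj (0 : 'M[C]_(m, n)) = 0.
Proof. by apply/matrixP => i j; rewrite !(adjE, mxE) rmorph0. Qed.

Lemma adj_sum m n (I : finType) (F : I -> 'M[C]_(m, n)) :
  adj (\sum_i F i) = \sum_i adj (F i).
Proof.
apply/matrixP => i j; rewrite adjE !summxE rmorph_sum.
by apply: eq_bigr => k _; rewrite adjE.
Qed.

Lemma adj_scalar n (c : C) : adj (c%:M : 'M_n) = (c^*)%:M.
Proof.
by apply/matrixP => i j; rewrite !(adjE, mxE) rmorphMn eq_sym.
Qed.

Lemma adj1 n : adj (1%:M : 'M[C]_n) = 1%:M.
Proof. by rewrite adj_scalar conjC1. Qed.

Lemma adj_delta m n (i : 'I_m) (j : 'I_n) :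
  adj (delta_mx i j : 'M[C]_(m, n)) = delta_mx j i.
Proof.
by apply/matrixP => k l; rewrite !(adjE, mxE) rmorph_nat andbC.
Qed.

Lemma adj_tens m n p q (A : 'M[C]_(m, n)) (B : 'M[C]_(p, q)) :
  adj (A *t B) = adj A *t adj B.
Proof.
apply/matrixP => k l.
rewrite -[k]mxtens_unindexK -[l]mxtens_unindexK.
case: (mxtens_unindex k) => i1 i2; case: (mxtens_unindex l) => j1 j2.
by rewrite adjE !tensmxE !adjE rmorphM.
Qed.

Definition ip m n (X Y : 'M[C]_(m, n)) : C := \tr (adj X *m Y).

Lemma ipE m n (X Y : 'M[C]_(m, n)) :
  ip X Y = \sum_k \sum_i (X i k)^* * Y i k.
Proof.
rewrite /ip /mxtrace; apply: eq_bigr => k _; rewrite mxE.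
by apply: eq_bigr => i _; rewrite adjE.
Qed.

Lemma ipDl m n (X Y Z : 'M[C]_(m, n)) : ip (X + Y) Z = ip X Z + ip Y Z.
Proof. by rewrite /ip adjD mulmxDl mxtraceD. Qed.
Lemma ipDr m n (X Y Z : 'M[C]_(m, n)) : ip Z (X + Y) = ip Z X + ip Z Y.
Proof. by rewrite /ip mulmxDr mxtraceD. Qed.
Lemma ipNl m n (X Z : 'M[C]_(m, n)) : ip (- X) Z = - ip X Z.
Proof. by rewrite /ip adjN mulNmx raddfN. Qed.
Lemma ipNr m n (X Z : 'M[C]_(m, n)) : ip Z (- X) = - ip Z X.
Proof. by rewrite /ip mulmxN raddfN. Qed.
Lemma ipZl m n c (X Z : 'M[C]_(m, n)) : ip (c *: X) Z = c^* * ip X Z.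
Proof. by rewrite /ip adjZ -scalemxAl mxtraceZ. Qed.
Lemma ipZr m n c (X Z : 'M[C]_(m, n)) : ip Z (c *: X) = c * ip Z X.
Proof. by rewrite /ip -scalemxAr mxtraceZ. Qed.
Lemma ip0l m n (Z : 'M[C]_(m, n)) : ip 0 Z = 0.
Proof. by rewrite /ip adj0 mul0mx mxtrace0. Qed.
Lemma ip0r m n (Z : 'M[C]_(m, n)) : ip Z 0 = 0.
Proof. by rewrite /ip mulmx0 mxtrace0. Qed.
Lemma ip_suml m n (I : finType) (F : I -> 'M[C]_(m, n)) Z :
  ip (\sum_i F i) Z = \sum_i ip (F i) Z.
Proof.
by rewrite /ip adj_sum mulmx_suml /mxtrace exchange_big /=; apply: eq_bigr => i _;
  rewrite summxE.
Qed.
Lemma ip_sumr m n (I : finType) (F : I -> 'M[C]_(m, n)) Z :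
  ip Z (\sum_i F i) = \sum_i ip Z (F i).
Proof.
by rewrite /ip mulmx_sumr /mxtrace exchange_big /=; apply: eq_bigr => i _;
  rewrite summxE.
Qed.
Lemma ip_conj m n (X Y : 'M[C]_(m, n)) : (ip X Y)^* = ip Y X.
Proof.
rewrite !ipE rmorph_sum; apply: eq_bigr => k _; rewrite rmorph_sum.
apply: eq_bigr => i _; by rewrite rmorphM /= conjCK mulrC.
Qed.
Lemma ip_ge0 m n (X : 'M[C]_(m, n)) : 0 <= ip X X.
Proof.
rewrite ipE; apply: sumr_ge0 => k _; apply: sumr_ge0 => i _.
by rewrite mulrC mul_conjC_ge0.
Qed.
Lemma ip_eq0 m n (X : 'M[C]_(m, n)) : ip X X = 0 -> X = 0.
Proof.
rewrite ipE => /eqP; rewrite psumr_eq0; last first.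
  by move=> k _; apply: sumr_ge0 => i _; rewrite mulrC mul_conjC_ge0.
move=> /allP H; apply/matrixP => i k; rewrite mxE.
have /H /= := mem_index_enum k; rewrite psumr_eq0; last first.
  by move=> l _; rewrite mulrC mul_conjC_ge0.
move=> /allP /(_ i (mem_index_enum _)) /=.
by rewrite mulrC mul_conjC_eq0 => /eqP.
Qed.
Lemma ip_real m n (X : 'M[C]_(m, n)) : (ip X X)^* = ip X X.
Proof. by rewrite ip_conj. Qed.
Lemma ipMr m n p (X : 'M[C]_(m, n)) (B : 'M[C]_(p, m)) Y :
  ip X (adj B *m Y) = ip (B *m X) Y.
Proof. by rewrite /ip adjM mulmxA. Qed.

Lemma psd_ip n m (P : 'M[C]_n) (X : 'M[C]_(n, m)) : psd P -> 0 <= ip X (P *m X).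
Proof.
move=> HP; rewrite /ip /mxtrace; apply: sumr_ge0 => k _.
have := HP (col k X); congr (_ <= _).
have -> : adj (col k X) = row k (adj X).
  by apply/matrixP => a b; rewrite !(adjE, mxE).
rewrite -row_mul mulmxA !mxE; apply: eq_bigr => l _; rewrite !mxE.
done.
Qed.


Lemma psd_real n (P : 'M[C]_n) (v : 'cV[C]_n) : psd P -> ((adj v *m P *m v) 0 0)^* = (adj v *m P *m v) 0 0.
Proof. by move=> /(_ v) H; apply/CrealP; apply: ger0_real. Qed.

Lemma bform_entry n (P : 'M[C]_n) (i k : 'I_n) :
  (adj (delta_mx i 0 : 'cV[C]_n) *m P *m (delta_mx k 0 : 'cV[C]_n)) 0 0 = P i k.
Proof. by rewrite adj_delta -rowE -colE !mxE. Qed.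

Lemma psd_herm n (P : 'M[C]_n) : psd P -> adj P = P.
Proof.
move=> HP; apply/matrixP => i k; rewrite adjE.
pose e (j : 'I_n) : 'cV[C]_n := delta_mx j 0.
pose B (v w : 'cV[C]_n) := (adj v *m P *m w) 0 0.
have BDl (v w u : 'cV[C]_n) : B (v + w) u = B v u + B w u by rewrite /B adjD !mulmxDl mxE.
have BDr (v w u : 'cV[C]_n) : B u (v + w) = B u v + B u w by rewrite /B !mulmxDr mxE.
have BZl c (v u : 'cV[C]_n) : B (c *: v) u = c^* * B v u by rewrite /B adjZ -!scalemxAl mxE.
have BZr c (v u : 'cV[C]_n) : B u (c *: v) = c * B u v.
  by rewrite /B -!scalemxAr mxE.
have Be j l : B (e j) (e l) = P j l by rewrite /B bform_entry.
have Hr (v : 'cV[C]_n) : (B v v)^* = B v v by apply: psd_real.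
have H1 := Hr (e i + e k).
have H2 := Hr (e i + 'i *: e k).
rewrite !(BDl, BDr, BZl, BZr, Be) in H1 H2.
have Hi := Hr (e i); have Hk := Hr (e k); rewrite !Be in Hi Hk.
rewrite !rmorphD !rmorphM /= conjCK conjCi Hi Hk in H1 H2.
set a := P i i in H1 H2 *; set dd := P k k in H1 H2 *.
set b := P i k in H1 H2 *; set c := P k i in H1 H2 *.
set bs := conjC b in H1 H2 *; set cs := conjC c in H1 H2 *.
have E : (a + bs + (cs + dd) - (a + b + (c + dd))) -
  'i * ((a + - 'i * bs + ('i * cs + 'i * (- 'i * dd))) -
        (a + 'i * b + (- 'i * c + - 'i * ('i * dd)))) =
  (1 + 'i * 'i) * (bs - c) + (1 - 'i * 'i) * (cs - b) by ring.
rewrite H1 H2 !subrr mulr0 subr0 -expr2 sqrCi addrN mul0r add0r opprK in E.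
apply/eqP; rewrite -subr_eq0; apply/eqP.
by move/esym/eqP: E; rewrite mulf_eq0 (_ : 1 + 1 = 2%:R) // pnatr_eq0 /= => /eqP.
Qed.

Lemma rowcol m n p (X : 'M[C]_(m, n)) (Y : 'M[C]_(n, p)) i j :
  (row i X *m col j Y) 0 0 = (X *m Y) i j.
Proof. by rewrite !mxE; apply: eq_bigr => k _; rewrite !mxE. Qed.

Lemma adj_diag n (v : 'rV[C]_n) : adj (diag_mx v) = diag_mx (map_mx conjC v).
Proof.
apply/matrixP => i j; rewrite adjE !mxE rmorphMn eq_sym.
by case: eqP => [->|] //; rewrite !mulr0n.
Qed.

Lemma psd_factor n (P : 'M[C]_n) : psd P -> exists A : 'M[C]_n, P = A *m adj A.
Proof.
move=> HP; have Hh := psd_herm HP.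
have Hn : P \is normalmx.
  by apply/normalmxP; change (P *m adj P = adj P *m P); rewrite Hh.
have HQ := spectral_unitarymx P.
set Q := spectralmx P in HQ *; set sp := spectral_diag P.
have QQ : Q *m adj Q = 1%:M by apply/unitarymxP.
have QQ' : adj Q *m Q = 1%:M.
  by have := mulmxKtV (1%:M : 'M[C]_n) HQ erefl; rewrite mul1mx.
have E : P = adj Q *m diag_mx sp *m Q.
  by move/orthomx_spectralP: Hn; rewrite invmx_unitary.
have sp_ge0 j : 0 <= sp 0 j.
  have := HP (col j (adj Q)).
  have -> : adj (col j (adj Q)) = row j Q.
    by apply/matrixP => a b; rewrite !(adjE, mxE) conjCK.
  rewrite -row_mul rowcol E !mulmxA QQ mul1mx -mulmxA QQ mulmx1 mxE eqxx mulr1n.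
  done.
exists (adj Q *m diag_mx (map_mx sqrtC sp)).
rewrite adjM adjK adj_diag E -!mulmxA; congr (_ *m _); rewrite mulmxA mulmx_diag.
congr (diag_mx _ *m _); apply/rowP => j; rewrite !mxE.
have h := sp_ge0 j.
rewrite conj_Creal ?sqrtC_real // -expr2 sqrtCK //.
Qed.
End Basics.

Section Tens.
Variable R : realType.
Local Notation C := (R[i]).

Lemma sum_index (V : nmodType) m n (F : 'I_(m * n) -> V) :
  \sum_p F p = \sum_(i < m) \sum_(j < n) F (mxtens_index (i, j)).
Proof.
rewrite pair_big /=.
rewrite (reindex (@mxtens_index m n)) /=; last first.
  by exists (@mxtens_unindex m n) => x _; rewrite ?mxtens_indexK ?mxtens_unindexK.
by apply: eq_bigr => -[i j].
Qed.

Lemma tens_suml m n p q (I : finType) (F : I -> 'M[C]_(m, n)) (B : 'M[C]_(p, q)) :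
  (\sum_i F i) *t B = \sum_i (F i *t B).
Proof.
apply/matrixP => k l.
rewrite -[k]mxtens_unindexK -[l]mxtens_unindexK.
case: (mxtens_unindex k) => i1 i2; case: (mxtens_unindex l) => j1 j2.
rewrite tensmxE !summxE big_distrl /=; apply: eq_bigr => i _.
by rewrite tensmxE.
Qed.

Lemma tens11 m n : (1%:M : 'M[C]_m) *t (1%:M : 'M[C]_n) = 1%:M.
Proof.
apply/matrixP => k l.
rewrite -[k]mxtens_unindexK -[l]mxtens_unindexK.
case: (mxtens_unindex k) => i1 i2; case: (mxtens_unindex l) => j1 j2.
rewrite tensmxE !mxE.
have -> : (mxtens_index (i1, i2) == mxtens_index (j1, j2)) = ((i1, i2) == (j1, j2)).
  apply/eqP/eqP => [/(congr1 (@mxtens_unindex m n))|->] //.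
  by rewrite !mxtens_indexK.
rewrite xpair_eqE.
by case: (i1 == j1); case: (i2 == j2); rewrite /= ?mulr1n ?mulr0n ?mulr1 ?mulr0 ?mul0r.
Qed.

Lemma sum_delta n : \sum_(j < n) (delta_mx j j : 'M[C]_n) = 1%:M.
Proof.
apply/matrixP => a b; rewrite summxE (bigD1 a) //= big1 ?addr0.
  by rewrite !mxE eqxx /= eq_sym.
by move=> j Hj; rewrite mxE eq_sym (negPf Hj).
Qed.

Lemma ctrlU_unitary N d (U : 'I_N -> bool -> 'M[C]_d) x :
  (forall j b, unitary (U j b)) -> adj (ctrlU U x) *m ctrlU U x = 1%:M.
Proof.
move=> HU; rewrite /ctrlU adj_sum mulmx_suml.
rewrite -tens11 -sum_delta tens_suml; apply: eq_bigr => j _.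
rewrite mulmx_sumr (bigD1 j) //= big1 ?addr0.
  by rewrite adj_tens tensmx_mul adj_delta mul_delta_mx (proj2 (HU _ _)).
move=> k Hk; rewrite adj_tens tensmx_mul adj_delta mul_delta_mx_cond eq_sym (negPf Hk).
by rewrite mulr0n tens0mx.
Qed.

Lemma idx_eq m n (i k : 'I_m) (j l : 'I_n) :
  (mxtens_index (i, j) == mxtens_index (k, l)) = ((i, j) == (k, l)).
Proof.
apply/eqP/eqP => [/(congr1 (@mxtens_unindex m n))|->] //.
by rewrite !mxtens_indexK.
Qed.

Lemma trace_form n (B X : 'M[C]_n) (v : 'cV[C]_n) :
  \tr (B *m (X *m (v *m adj v) *m adj X)) = (adj (X *m v) *m B *m (X *m v)) 0 0.
Proof.
rewrite (_ : X *m (v *m adj v) *m adj X = (X *m v) *m adj (X *m v)); last first.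
  by rewrite adjM !mulmxA.
by rewrite [in LHS]mulmxA [in LHS]mxtrace_mulC /mxtrace big_ord1 !mulmxA.
Qed.

Lemma quad n (B : 'M[C]_n) (w : 'cV[C]_n) :
  (adj w *m B *m w) 0 0 = \sum_p \sum_q (w p 0)^* * B p q * w q 0.
Proof.
rewrite mxE [RHS]exchange_big /=; apply: eq_bigr => q _; rewrite mxE big_distrl /=.
by apply: eq_bigr => p _; rewrite adjE.
Qed.

Lemma tr_ip n m (B X : 'M[C]_n) (Y : 'M[C]_(n, m)) :
  \tr (B *m (X *m (Y *m adj Y) *m adj X)) = ip (X *m Y) (B *m (X *m Y)).
Proof.
rewrite (_ : X *m (Y *m adj Y) *m adj X = (X *m Y) *m adj (X *m Y)); last first.
  by rewrite adjM !mulmxA.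
by rewrite mulmxA mxtrace_mulC /ip.
Qed.

Lemma ip_cV n (B : 'M[C]_n) (w : 'cV[C]_n) : ip w (B *m w) = (adj w *m B *m w) 0 0.
Proof. by rewrite /ip /mxtrace big_ord1 mulmxA. Qed.

Lemma psd_outer n (v : 'cV[C]_n) : psd (v *m adj v).
Proof.
move=> u.
rewrite (_ : adj u *m (v *m adj v) *m u = (adj u *m v) *m adj (adj u *m v)); last first.
  by rewrite adjM adjK !mulmxA.
by rewrite mxE big_ord1 adjE mul_conjC_ge0.
Qed.

End Tens.

Section Main.
Variable R : realType.
Local Notation C := (R[i]).
Variables (N d M K : nat).
Local Notation D := K.+2.
Variable U : 'I_N -> bool -> 'M[C]_d.
Hypothesis HU : forall j b, unitary (U j b).
Variable A : 'M[C]_(N * d, M).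

Definition Wm j b : 'M[C]_(N * d) := (delta_mx j j : 'M[C]_N) *t U j b.
Definition Om j b := Wm j b *m A.
Definition gg j := ip (Om j false) (Om j true).
Definition lam j : C := if gg j == 0 then 1 else (gg j)^* / `|gg j|.
Definition hp j := Om j false + lam j *: Om j true.
Definition hm j := Om j false - lam j *: Om j true.
Definition pp j := sqrtC (ip (hp j) (hp j)).
Definition qq j := sqrtC (ip (hm j) (hm j)).
Definition Fjs j (s : 'I_D) :=
  if val s == 0%N then (pp j)^-1 *: hp j
  else if val s == 1%N then (qq j)^-1 *: hm j else 0.
Definition cjs j (s : 'I_D) : C :=
  if val s == 0%N then pp j / 2 else if val s == 1%N then qq j / 2 else 0.
Definition yv j (b : bool) (s : 'I_D) : C :=
  if b then (if val s == 0%N then (lam j)^* else if val s == 1%N then - (lam j)^* else 1)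
  else 1.

Lemma lamJ j : (lam j)^* * lam j = 1.
Proof.
rewrite /lam; case: eqP => [_|/eqP H]; first by rewrite conjC1 mulr1.
rewrite rmorphM /= conjCK fmorphV /= (conj_Creal (normr_real _)).
rewrite mulrACA -normCK -expr2 exprVn mulfV //.
by rewrite expf_eq0 /= normr_eq0.
Qed.

Lemma lamg j : (lam j * gg j)^* = lam j * gg j.
Proof.
rewrite /lam; case: eqP => [->|/eqP H]; first by rewrite mulr0 rmorph0.
rewrite mulrAC -normCKC expr2 mulfK ?normr_eq0 //.
by rewrite (conj_Creal (normr_real _)).
Qed.

Lemma ipW j b : ip (Om j b) (Om j b) = ip A (((delta_mx j j : 'M[C]_N) *t 1%:M) *m A).
Proof.
rewrite /Om -ipMr mulmxA adj_tens tensmx_mul adj_delta mul_delta_mx.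
by rewrite (proj2 (HU _ _)).
Qed.

Lemma ip_cross j k b c : j != k -> ip (Om j b) (Om k c) = 0.
Proof.
move=> Hjk; rewrite /Om -ipMr mulmxA /Wm adj_tens tensmx_mul adj_delta.
by rewrite mul_delta_mx_cond (negPf Hjk) mulr0n tens0mx mul0mx ip0r.
Qed.

Lemma hp_hm j : ip (hp j) (hm j) = 0.
Proof.
rewrite /hp /hm !(ipDl, ipDr, ipNr, ipZl, ipZr).
rewrite (ipW j true) -(ipW j false).
rewrite -/(gg j) -[ip (Om j true) (Om j false)]ip_conj -/(gg j).
have L1 := lamg j; rewrite rmorphM /= in L1.
have L2 := lamJ j.
set a := ip _ _.
rewrite (_ : forall a g l : C, a - l * g + l^* * (g^* - l * a) =
  a * (1 - l^* * l) + (l^* * g^* - l * g)); last by move=> *; ring.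
by rewrite L1 L2 !subrr mulr0 addr0.
Qed.


Lemma nrm_conj m n (X : 'M[C]_(m, n)) : (sqrtC (ip X X))^* = sqrtC (ip X X).
Proof. by rewrite conj_Creal // sqrtC_real // ip_ge0. Qed.

Lemma nrm_scale m n (X : 'M[C]_(m, n)) :
  sqrtC (ip X X) *: ((sqrtC (ip X X))^-1 *: X) = X.
Proof.
have [H|H] := eqVneq (sqrtC (ip X X)) 0.
  rewrite H scale0r.
  by move/eqP: H; rewrite sqrtC_eq0 => /eqP /ip_eq0 ->.
by rewrite scalerA mulfV ?scale1r.
Qed.

Lemma nrm_ip m n (X : 'M[C]_(m, n)) :
  ip ((sqrtC (ip X X))^-1 *: X) ((sqrtC (ip X X))^-1 *: X) =
  (sqrtC (ip X X) != 0)%:R.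
Proof.
rewrite ipZl ipZr fmorphV /= nrm_conj.
have [H|H] := eqVneq (sqrtC (ip X X)) 0.
  by rewrite H invr0 mul0r.
set p := sqrtC _.
rewrite -[ip X X]sqrtCK -/p expr2 [p^-1 * (p * _)]mulrA mulVf // mul1r mulVf //.
Qed.

Definition cF j s := ip (Fjs j s) (Fjs j s).

Lemma FjsE j (s : 'I_D) : Fjs j s =
  (if val s == 0%N then (pp j)^-1 else if val s == 1%N then (qq j)^-1 else 0) *: Om j false +
  (if val s == 0%N then (pp j)^-1 * lam j else if val s == 1%N then - ((qq j)^-1 * lam j) else 0)
     *: Om j true.
Proof.
rewrite /Fjs /hp /hm; case: ifP => _; first by rewrite scalerDr scalerA.
case: ifP => _; last by rewrite !scale0r addr0.
by rewrite scalerDr scalerN scalerA scaleNr.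
Qed.

Lemma ipF_cross j k s t : j != k -> ip (Fjs j s) (Fjs k t) = 0.
Proof.
move=> Hjk; rewrite !FjsE !(ipDl, ipDr, ipZl, ipZr) !ip_cross //.
by rewrite !mulr0 !addr0.
Qed.

Lemma ipF_same j (s t : 'I_D) : ip (Fjs j s) (Fjs j t) = if s == t then cF j s else 0.
Proof.
case: eqP => [->|Hst] //.
rewrite /Fjs.
have [s0|s0] := eqVneq (val s) 0%N; have [t0|t0] := eqVneq (val t) 0%N;
have [s1|s1] := eqVneq (val s) 1%N; have [t1|t1] := eqVneq (val t) 1%N;
rewrite ?s0 ?t0 ?s1 ?t1 /= ?ip0l ?ip0r //;
try (by case: Hst; apply/val_inj; rewrite /= ?s0 ?t0 ?s1 ?t1).
all: rewrite ipZl ipZr ?hp_hm ?mulr0 //.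
all: by rewrite -ip_conj hp_hm rmorph0 !mulr0.
Qed.

Lemma cF_val j s : cF j s = 0 \/ cF j s = 1.
Proof.
rewrite /cF /Fjs; case: ifP => _; first by rewrite /pp nrm_ip; case: (_ != 0); auto.
case: ifP => _; first by rewrite /qq nrm_ip; case: (_ != 0); auto.
by rewrite ip0l; auto.
Qed.

Lemma cjs_cF j s : cjs j s * (1 - cF j s) = 0.
Proof.
rewrite /cjs /cF /Fjs; case: ifP => _.
  rewrite /pp nrm_ip; case: eqP => [->|_]; first by rewrite mul0r mul0r.
  by rewrite subrr mulr0.
case: ifP => _; last by rewrite mul0r.
rewrite /qq nrm_ip; case: eqP => [->|_]; first by rewrite mul0r mul0r.
by rewrite subrr mulr0.
Qed.

Lemma sumD (F : 'I_D -> C) : (forall s : 'I_D, (1 < val s)%N -> F s = 0) ->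
  \sum_(s < D) F s = F ord0 + F (lift ord0 ord0).
Proof.
move=> H; rewrite !big_ord_recl big1 ?addr0 //.
by move=> i _; apply: H.
Qed.

Lemma sumDm m n (F : 'I_D -> 'M[C]_(m, n)) : (forall s : 'I_D, (1 < val s)%N -> F s = 0) ->
  \sum_(s < D) F s = F ord0 + F (lift ord0 ord0).
Proof.
move=> H; rewrite !big_ord_recl big1 ?addr0 //.
by move=> i _; apply: H.
Qed.

Lemma repOm j b : Om j b = \sum_(s < D) (yv j b s * cjs j s) *: Fjs j s.
Proof.
rewrite sumDm; last first.
  move=> s Hs; rewrite /Fjs; case: ifP => /eqP H0; first by rewrite H0 in Hs.
  case: ifP => /eqP H1; first by rewrite H1 in Hs.
  by rewrite scaler0.
rewrite /yv /cjs /Fjs /=.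
have H c m n (X : 'M[C]_(m, n)) : (c * (sqrtC (ip X X) / 2)) *: ((sqrtC (ip X X))^-1 *: X)
   = (c / 2) *: X.
  rewrite (_ : c * (sqrtC (ip X X) / 2) = (c / 2) * sqrtC (ip X X)); last first.
    by ring.
  by rewrite -scalerA nrm_scale.

rewrite /pp /qq H. rewrite H /hp /hm.
have two : (2 : C) != 0 by rewrite pnatr_eq0.
have L := lamJ j.
case: b; set u := Om j false; set w := Om j true; set l := lam j in L *;
  clearbody u w; apply/matrixP => a c; rewrite !mxE.
- transitivity ((l^* * l) * w a c); first by rewrite L mul1r.
  by field.
- by field.
Qed.

Local Notation ui p := (mxtens_unindex p).
Definition Fp (p : 'I_(N * D)) := Fjs (ui p).1 (ui p).2.
Definition cp (p : 'I_(N * D)) := cF (ui p).1 (ui p).2.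
Definition phi (x : {ffun 'I_N -> bool}) (p : 'I_(N * D)) : C :=
  yv (ui p).1 (x (ui p).1) (ui p).2 * cjs (ui p).1 (ui p).2.

Lemma ortho p q : ip (Fp p) (Fp q) = if p == q then cp p else 0.
Proof.
rewrite -[p]mxtens_unindexK -[q]mxtens_unindexK /Fp /cp !mxtens_indexK.
case: (ui p) => j s; case: (ui q) => k t /=.
rewrite idx_eq xpair_eqE.
have [<-|Hjk] := eqVneq j k; last by rewrite ipF_cross.
by rewrite ipF_same.
Qed.

Lemma phi_cp x p : phi x p * (1 - cp p) = 0.
Proof. by rewrite /phi -mulrA cjs_cF mulr0. Qed.

Lemma UA_rep x : ctrlU U x *m A = \sum_p phi x p *: Fp p.
Proof.
rewrite /ctrlU mulmx_suml sum_index; apply: eq_bigr => j _.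
rewrite -[_ *m A]/(Om j (x j)) repOm; apply: eq_bigr => s _.
by rewrite /phi /Fp mxtens_indexK.
Qed.

Definition psif (p : 'I_(N * D)) := cjs (ui p).1 (ui p).2.
Definition psiv : 'cV[C]_(N * D) := \col_p psif p.
Definition yrow (x : {ffun 'I_N -> bool}) (p : 'I_(N * D)) := yv (ui p).1 (x (ui p).1) (ui p).2.
Definition Up j b : 'M[C]_D := diag_mx (\row_s yv j b s).
Variable Pi : bool -> 'M[C]_(N * d).
Definition Pip a : 'M[C]_(N * D) := \matrix_(p, q)
  (ip (Fp p) (Pi a *m Fp q) + (if a && (p == q) then 1 - cp p else 0)).

Lemma ctrlUp x : ctrlU Up x = diag_mx (\row_p yrow x p).
Proof.
apply/matrixP => p q.
rewrite -[p]mxtens_unindexK -[q]mxtens_unindexK.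
case: (ui p) => j s; case: (ui q) => k t.
rewrite /ctrlU summxE (bigD1 j) //= big1 ?addr0; last first.
  by move=> i Hi; rewrite tensmxE mxE eq_sym (negPf Hi) mul0r.
rewrite tensmxE !mxE /yrow mxtens_indexK idx_eq xpair_eqE /= eqxx /=.
by rewrite eq_sym; case: (j == k); rewrite /= ?mul1r ?mul0r ?mulr0n.
Qed.

Lemma Uxpsi x : ctrlU Up x *m psiv = \col_p phi x p.
Proof.
rewrite ctrlUp mul_diag_mx; apply/matrixP => p o; rewrite !mxE.
by rewrite /phi /yrow /psif.
Qed.

Lemma QF a (w : 'cV[C]_(N * D)) : (adj w *m Pip a *m w) 0 0 =
  ip (\sum_p w p 0 *: Fp p) (Pi a *m \sum_p w p 0 *: Fp p) +
  (if a then \sum_p (w p 0)^* * w p 0 * (1 - cp p) else 0).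
Proof.
rewrite quad mulmx_sumr ip_suml.
have -> : \sum_p \sum_q (w p 0)^* * Pip a p q * w q 0 =
  \sum_p \sum_q ((w p 0)^* * ip (Fp p) (Pi a *m Fp q) * w q 0) +
  \sum_p \sum_q ((w p 0)^* * (if a && (p == q) then 1 - cp p else 0) * w q 0).
  rewrite -big_split /=; apply: eq_bigr => p _; rewrite -big_split /=.
  by apply: eq_bigr => q _; rewrite mxE mulrDr mulrDl.
congr (_ + _).
  apply: eq_bigr => p _; rewrite ipZl ip_sumr big_distrr /=.
  apply: eq_bigr => q _; rewrite -scalemxAr ipZr.
  by rewrite [w q 0 * _]mulrC mulrA.
case: a; last first.
  by apply: big1 => p _; apply: big1 => q _; rewrite /= mulr0 mul0r.
apply: eq_bigr => p _; rewrite (bigD1 p) //= big1 ?addr0; last first.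
  by move=> q Hq; rewrite eq_sym (negPf Hq) mulr0 mul0r.
by rewrite eqxx mulrAC.
Qed.

Lemma cp_le1 p : 0 <= 1 - cp p.
Proof. by rewrite /cp; case: (cF_val (ui p).1 (ui p).2) => ->; rewrite ?subr0 ?subrr ?ler01. Qed.

Lemma Pip_psd a : povm2 Pi -> psd (Pip a).
Proof.
move=> [H0 [H1 _]] v; rewrite QF; apply: addr_ge0.
  by apply: psd_ip; case: a.
case: a => //; apply: sumr_ge0 => p _; apply: mulr_ge0; last exact: cp_le1.
by rewrite mulrC mul_conjC_ge0.
Qed.

Lemma Pip_sum : povm2 Pi -> Pip false + Pip true = 1%:M.
Proof.
move=> [_ [_ HS]]; apply/matrixP => p q; rewrite !mxE /= addr0 addrA -ipDr -mulmxDl HS.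
rewrite mul1mx ortho; case: eqP => [->|_]; last by rewrite addr0.
by rewrite addrC subrK.
Qed.

Lemma Up_unitary j b : unitary (Up j b).
Proof.
have E : forall r : 'rV[C]_D, (forall s, r 0 s = 1) -> diag_mx r = 1%:M.
  move=> r Hr; rewrite (_ : r = const_mx 1) ?diag_const_mx //.
  by apply/rowP => s; rewrite Hr mxE.
have L := lamJ j.
rewrite /unitary /Up adj_diag !mulmx_diag; split; apply: E => s; rewrite !mxE /yv;
  case: b => //=; rewrite ?conjC1 ?mulr1 //.
- case: ifP => _; first by rewrite conjCK L.
  case: ifP => _; last by rewrite conjC1 mulr1.
  by rewrite rmorphN /= conjCK mulrNN L.
- case: ifP => _; first by rewrite conjCK mulrC L.
  case: ifP => _; last by rewrite conjC1 mulr1.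
  by rewrite rmorphN /= conjCK mulrNN mulrC L.
Qed.

Lemma normrep x : ip (\sum_p phi x p *: Fp p) (\sum_p phi x p *: Fp p) =
  \sum_p (phi x p)^* * phi x p.
Proof.
rewrite ip_suml; apply: eq_bigr => p _; rewrite ipZl ip_sumr (bigD1 p) //= big1 ?addr0.
  rewrite ipZr ortho eqxx.
  have := phi_cp x p; rewrite mulrBr mulr1 => /eqP; rewrite subr_eq0 => /eqP <-.
  by rewrite mulrC.
by move=> q Hq; rewrite ipZr ortho eq_sym (negPf Hq) mulr0.
Qed.

Lemma psi_trace : \tr (psiv *m adj psiv) = ip A A.
Proof.
rewrite mxtrace_mulC /mxtrace big_ord1 mxE.
pose x0 : {ffun 'I_N -> bool} := [ffun _ => false].
transitivity (\sum_p (phi x0 p)^* * phi x0 p).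
  by apply: eq_bigr => p _; rewrite adjE !mxE /phi /psif ffunE /yv mul1r.
by rewrite -normrep -UA_rep -ipMr mulmxA ctrlU_unitary // mul1mx.
Qed.

Lemma beh a x : (adj (ctrlU Up x *m psiv) *m Pip a *m (ctrlU Up x *m psiv)) 0 0 =
  ip (ctrlU U x *m A) (Pi a *m (ctrlU U x *m A)).
Proof.
rewrite Uxpsi QF.
have E : \sum_p (\col_p0 phi x p0) p 0 *: Fp p = \sum_p phi x p *: Fp p.
  by apply: eq_bigr => p _; rewrite mxE.
rewrite E UA_rep; case: a => /=; last by rewrite addr0.
rewrite [X in _ + X = _]big1 ?addr0 // => p _.
by rewrite !mxE -mulrA phi_cp mulr0.
Qed.

End Main.

Theorem lemma3 (R : realType) (N d : nat) :
  (1 <= N)%N -> (1 <= d)%N ->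
  forall P : behavior R N, @Q_N1 R N d P -> @Q_N1 R N N.+1 P.
Proof.
case: N => [//|K] _ _ P [rho [U [Pi [Hrho [HU [HPi HP]]]]]].
have [A HA] := psd_factor (proj1 Hrho).
exists (psiv K U A *m adj (psiv K U A)), (Up K U A), (Pip K U A Pi).
split; [split|split; [|split; [split; [|split]|]]].
- exact: psd_outer.
- by rewrite psi_trace // /ip mxtrace_mulC -HA (proj2 Hrho).
- by move=> j b; apply: Up_unitary.
- exact: Pip_psd.
- exact: Pip_psd.
- exact: Pip_sum.
- move=> a x; rewrite HP HA !tr_ip ip_cV beh //.
Qed.
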